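(* Let $B$ be a C*-algebra and let $A$ be a regular subalgebra of $B$ satisfying the ideal intersection property. Then every $B$-invariant regular ideal of $A$ is normalizer-invariant.
   Context: Ideals are closed two-sided ideals. $A\subseteq B$ is a closed *-subalgebra. A normalizer of $A$ in $B$ is $n\in B$ with $n^*An\subseteq A$ and $nAn^*\subseteq A$; $A$ is a regular subalgebra if the normalizers span a dense subspace of $B$ and $A$ contains an approximate unit for $B$. A subset $S\subseteq A$ is normalizer-invariant if $nSn^*\subseteq S$ for every normalizer $n$. $S\subseteq A$ is $B$-invariant if $[SB]=[BS]$ ($[\cdot]$ = closed linear span). For an ideal $I$ of $A$, $\mathrm{Ann}_A(I)=\{x\in A: xs=0\ \forall s\in I\}$, and $I$ is regular if $\mathrm{Ann}_A(\mathrm{Ann}_A(I))=I$. $A$ satisfies the ideal intersection property if $J\cap A\neq\{0\}$ for every nonzero ideal $J$ of $B$. *)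

(* Defs.v *)
From mathcomp Require Import all_boot all_order all_algebra.
From mathcomp Require Import all_classical all_reals all_analysis.
From mathcomp Require Import complex.
Import Order.TTheory GRing.Theory Num.Theory.
Import numFieldNormedType.Exports.

Set Implicit Arguments.
Unset Strict Implicit.
Unset Printing Implicit Defensive.

Local Open Scope classical_set_scope.
Local Open Scope ring_scope.

Record cstar_algebra (R : realType) (V : completeNormedModType R[i]) := CstarAlgebra {
  cmul : V -> V -> V;
  cstar : V -> V;
  cmulA : forall x y z, cmul x (cmul y z) = cmul (cmul x y) z;
  cmul_linl : forall (a : R[i]) x y z, cmul (a *: x + y) z = a *: cmul x z + cmul y z;
  cmul_linr : forall (a : R[i]) x y z, cmul z (a *: x + y) = a *: cmul z x + cmul z y;
  cstarD : forall x y, cstar (x + y) = cstar x + cstar y;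
  cstarZ : forall (a : R[i]) x, cstar (a *: x) = a^* *: cstar x;
  cstarK : forall x, cstar (cstar x) = x;
  cstarM : forall x y, cstar (cmul x y) = cmul (cstar y) (cstar x);
  cnormM : forall x y, `|cmul x y| <= `|x| * `|y|;
  cnorm_cstar_id : forall x, `|cmul (cstar x) x| = `|x| ^+ 2
}.

Section Defs.
Context {R : realType} {V : completeNormedModType R[i]} (B : cstar_algebra V).

Local Notation "x * y" := (cmul B x y).
Local Notation "x ^*" := (cstar B x).

Definition is_subspace (S : set V) : Prop :=
  S 0 /\ (forall (a : R[i]) x y, S x -> S y -> S (a *: x + y)).

Definition closed_star_subalgebra (A : set V) : Prop :=
  [/\ is_subspace A, closed A,
      (forall x y, A x -> A y -> A (x * y)) & (forall x, A x -> A (x ^*))].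

Definition ideal_of (A I : set V) : Prop :=
  [/\ is_subspace I, closed I, I `<=` A &
      (forall a x, A a -> I x -> I (a * x) /\ I (x * a))].

Definition ideal (J : set V) : Prop := ideal_of setT J.

Definition cspan (S : set V) : set V :=
  \bigcap_(W in [set W : set V | [/\ is_subspace W, closed W & S `<=` W]]) W.

Definition setM (S T : set V) : set V :=
  [set z | exists x y, [/\ S x, T y & z = x * y]].

Definition normalizer (A : set V) (n : V) : Prop :=
  (forall a, A a -> A (n ^* * a * n)) /\ (forall a, A a -> A (n * a * n ^*)).

Definition positive (x : V) : Prop := exists y, x = y ^* * y.

(* A contains an approximate unit for B: a net (here: a proper filter on an
   index type) of positive contractions e_i of A with e_i b -> b and b e_i -> b
   for every b in B. *)
Definition has_approx_unit (A : set V) : Prop :=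
  exists (I : Type) (F : set_system I) (e : I -> V),
    [/\ ProperFilter F,
        (forall i, A (e i) /\ positive (e i) /\ `|e i| <= 1) &
        (forall b, ((fun i => e i * b) @ F --> b) /\ ((fun i => b * e i) @ F --> b))].

Definition regular_subalgebra (A : set V) : Prop :=
  [/\ closed_star_subalgebra A,
      closure (cspan (normalizer A)) = setT &
      has_approx_unit A].

Definition normalizer_invariant (A S : set V) : Prop :=
  forall n, normalizer A n -> forall s, S s -> S (n * s * n ^*).

Definition B_invariant (S : set V) : Prop :=
  cspan (setM S setT) = cspan (setM setT S).

Definition Ann (A I : set V) : set V :=
  [set x | A x /\ forall s, I s -> x * s = 0].

Definition regular_ideal (A I : set V) : Prop := Ann A (Ann A I) = I.

Definition ideal_intersection_property (A : set V) : Prop :=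
  forall J, ideal J -> J <> [set 0] -> J `&` A <> [set 0].

End Defs.

(* Main.v *)
Require Import Defs.
From mathcomp Require Import all_boot all_order all_algebra.
From mathcomp Require Import all_classical all_reals all_analysis.
From mathcomp Require Import complex.
Import Order.TTheory GRing.Theory Num.Theory.
Import numFieldNormedType.Exports.

Local Open Scope classical_set_scope.
Local Open Scope ring_scope.

Section Helpers.
Context {R : realType} {V : completeNormedModType R[i]} (B : cstar_algebra V).

Lemma cmul0r (z : V) : cmul B z 0 = 0.
Proof.
have := cmul_linr B 1 0 0 z; rewrite !scale1r addr0 => h.
by apply: (@addrI _ (cmul B z 0)); rewrite addr0 -h.
Qed.

Lemma cmul0l (z : V) : cmul B 0 z = 0.
Proof.
have := cmul_linl B 1 0 0 z; rewrite !scale1r addr0 => h.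
by apply: (@addrI _ (cmul B 0 z)); rewrite addr0 -h.
Qed.

Definition gmap (x c z : V) := cmul B (cmul B c z) x.

Lemma gmap_lin x c (a : R[i]) z w :
  gmap x c (a *: z + w) = a *: gmap x c z + gmap x c w.
Proof. by rewrite /gmap cmul_linr cmul_linl. Qed.

Lemma gmapB x c z w : gmap x c z - gmap x c w = gmap x c (z - w).
Proof.
by rewrite addrC [z - w]addrC -(scaleN1r w) gmap_lin scaleN1r.
Qed.

Lemma gmap_norm x c z : `|gmap x c z| <= `|x| * `|c| * `|z|.
Proof.
rewrite /gmap; apply: (le_trans (cnormM B _ _)).
apply: (le_trans (ler_wpM2r (normr_ge0 x) (cnormM B c z))).
have -> : `|x| * `|c| * `|z| = `|c| * `|z| * `|x| by rewrite -mulrA mulrC.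
exact: lexx.
Qed.

Lemma gmap_cont x c : continuous (gmap x c).
Proof.
move=> z0; apply/cvgrPdist_lt => e e0.
set K := `|x| * `|c| + 1.
have K0 : 0 < K by rewrite /K ltr_wpDl // mulr_ge0.
have eK : 0 < e / K by rewrite divr_gt0.
have := @cvgr_dist_lt _ V V (nbhs z0) _ id z0 (@cvg_id _ (nbhs z0)) (e / K) eK.
move=> /(_ (nbhs_filter z0)); apply: filterS => t /= Ht.
rewrite gmapB (le_lt_trans (gmap_norm _ _ _)) //.
apply: (@le_lt_trans _ _ (K * `|z0 - t|)).
  by rewrite ler_wpM2r // /K lerDl.
by rewrite -ltr_pdivlMl // mulrC.
Qed.

End Helpers.

Theorem proposition4p3 (R : realType) (V : completeNormedModType R[i])
  (B : cstar_algebra V) (A : set V) :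
  regular_subalgebra B A ->
  ideal_intersection_property B A ->
  forall I : set V,
    ideal_of B A I -> B_invariant B I -> regular_ideal B A I ->
    normalizer_invariant B A I.
Proof.
move=> _ _ I [Isub Icl IA Iid] Binv Ireg n [nA1 nA2] s Is.
rewrite -Ireg; split; first exact: nA2 (IA s Is).
move=> x [Ax Hx].
have Ix : forall i, I i -> cmul B i x = 0.
  move=> i; rewrite -{1}Ireg => -[_ Hi]; exact: Hi.
pose W := [set z | gmap B x n z = 0].
have HW : cspan (setM B setT I) `<=` W.
  move=> w Hw; apply: Hw; split.
  - split; first by rewrite /W /= /gmap cmul0r cmul0l.
    by move=> a y z; rewrite /W /= => Hy Hz; rewrite gmap_lin Hy Hz scaler0 addr0.
  - have -> : W = gmap B x n @^-1` [set 0] by [].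
    apply: preimage_closed; last first.
      exact/accessible_closed_set1/hausdorff_accessible/norm_hausdorff.
    by move=> z _; apply: gmap_cont.
  - move=> z [b [i [_ Ii ->]]]; rewrite /W /= /gmap.
    by rewrite cmulA -cmulA (Ix i Ii) cmul0r.
have : W (cmul B s (cstar B n)).
  apply: HW; rewrite -Binv => Wf [_ _ HWf]; apply: HWf.
  by exists s, (cstar B n).
by rewrite /W /= /gmap cmulA.
Qed.
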